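(* Let $\bar g$ be a two-dimensional Lorentzian metric and $\psi$ a smooth function such that $d\psi$ is a non-null conformal Killing one-form of $\bar g$, and let $(x,t)$ be local coordinates in which $\psi=\psi(x)$ and $\bar g=\psi'(x)\,(dx^2-dt^2)$. Let $F_1,F_2$ be functions of $x$ only such that $F_1\,dF_2$ is also a non-null conformal Killing one-form of $\bar g$. Then there is a constant $\tilde k$ such that \[ F_1\,dF_2=\tilde k\, d\psi. \]
   Context: A one-form $\omega$ on a pseudo-Riemannian manifold $(M,\bar g)$ is called a conformal Killing one-form if its metric dual vector field $X=\bar g^{-1}(\omega)$ is a conformal Killing vector field, i.e. $\mathcal{L}_X\bar g=\lambda\,\bar g$ for some function $\lambda$. Non-null means $\bar g^{-1}(\omega,\omega)\neq0$. *)

(* Defs.v *)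
From Stdlib Require Import Reals.
From Coquelicot Require Import Coquelicot.
Open Scope R_scope.

Inductive idx := ix | it.

Definition pt := (R * R)%type.

Definition sum2 (f : idx -> R) : R := f ix + f it.

Definition pd (i : idx) (f : pt -> R) (p : pt) : R :=
  match i with
  | ix => Derive (fun x => f (x, snd p)) (fst p)
  | it => Derive (fun t => f (fst p, t)) (snd p)
  end.

Definition metric := idx -> idx -> pt -> R.
Definition oneform := idx -> pt -> R.
Definition vecfield := idx -> pt -> R.

Definition detg (g : metric) (p : pt) : R :=
  g ix ix p * g it it p - g ix it p * g it ix p.

Definition ginv (g : metric) : metric := fun i j p =>
  match i, j with
  | ix, ix => g it it p / detg g p
  | it, it => g ix ix p / detg g p
  | ix, it => - g ix it p / detg g p
  | it, ix => - g it ix p / detg g p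
  end.

Definition sharp (g : metric) (w : oneform) : vecfield :=
  fun i p => sum2 (fun j => ginv g i j p * w j p).

Definition lie_metric (X : vecfield) (g : metric) : metric := fun i j p =>
  sum2 (fun k => X k p * pd k (g i j) p)
  + sum2 (fun k => g k j p * pd i (X k) p)
  + sum2 (fun k => g i k p * pd j (X k) p).

Definition conformal_killing_vf (U : pt -> Prop) (g : metric) (X : vecfield) : Prop :=
  exists lam : pt -> R, forall p, U p -> forall i j,
    lie_metric X g i j p = lam p * g i j p.

Definition conformal_killing_form (U : pt -> Prop) (g : metric) (w : oneform) : Prop :=
  conformal_killing_vf U g (sharp g w).

Definition inner_inv (g : metric) (w : oneform) (p : pt) : R :=
  sum2 (fun i => sum2 (fun j => ginv g i j p * w i p * w j p)).

Definition non_null (U : pt -> Prop) (g : metric) (w : oneform) : Prop :=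
  forall p, U p -> inner_inv g w p <> 0.

Definition lorentzian2 (U : pt -> Prop) (g : metric) : Prop :=
  forall p, U p -> (forall i j, g i j p = g j i p) /\ detg g p < 0.

Definition dform (f : pt -> R) : oneform := fun i p => pd i f p.
Definition fmul (h : pt -> R) (w : oneform) : oneform := fun i p => h p * w i p.

Definition of_x (f : R -> R) : pt -> R := fun p => f (fst p).

Definition conf_metric (psi : R -> R) : metric := fun i j p =>
  match i, j with
  | ix, ix => Derive psi (fst p)
  | it, it => - Derive psi (fst p)
  | _, _ => 0
  end.

Definition box (a b c d : R) : pt -> Prop :=
  fun p => a < fst p < b /\ c < snd p < d.

Definition smooth_on (a b : R) (f : R -> R) : Prop :=
  forall n x, a < x < b -> ex_derive_n f n x.

(* Main.v *)
Require Import Defs.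
From Stdlib Require Import Reals Lra.
From Coquelicot Require Import Coquelicot.
Open Scope R_scope.

Lemma const_on (Y : R -> R) (a b : R) :
  (forall x, a < x < b -> ex_derive Y x /\ Derive Y x = 0) ->
  forall x y, a < x < b -> a < y < b -> Y x = Y y.
Proof.
  intros H x y Hx Hy.
  destruct (MVT_gen Y x y (Derive Y)) as [c [Hc E]].
  - intros z Hz. apply Derive_correct. apply H.
    unfold Rmin, Rmax in Hz; destruct (Rle_dec x y); lra.
  - intros z Hz. apply continuity_pt_filterlim. apply (ex_derive_continuous (K:=R_AbsRing) (V:=R_NormedModule)).
    apply H. unfold Rmin, Rmax in Hz; destruct (Rle_dec x y); lra.
  - assert (Hc' : a < c < b) by (unfold Rmin, Rmax in Hc; destruct (Rle_dec x y); lra).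
    rewrite (proj2 (H c Hc')) in E. lra.
Qed.

Lemma interval_locally (a b x : R) (P : R -> Prop) :
  a < x < b -> (forall y, a < y < b -> P y) -> locally x P.
Proof.
  intros Hx HP.
  assert (He : 0 < Rmin (x - a) (b - x)) by (apply Rmin_pos; lra).
  exists (mkposreal _ He). intros y Hy. apply HP.
  unfold ball in Hy; simpl in Hy; unfold AbsRing_ball, abs, minus, plus, opp in Hy; simpl in Hy.
  apply Rabs_lt_between in Hy.
  pose proof (Rmin_l (x - a) (b - x)). pose proof (Rmin_r (x - a) (b - x)). lra.
Qed.

Theorem proposition2 (a b c d : R) (psi F1 F2 : R -> R) :
  a < b -> c < d ->
  smooth_on a b psi -> smooth_on a b F1 -> smooth_on a b F2 ->
  lorentzian2 (box a b c d) (conf_metric psi) ->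
  conformal_killing_form (box a b c d) (conf_metric psi) (dform (of_x psi)) ->
  non_null (box a b c d) (conf_metric psi) (dform (of_x psi)) ->
  conformal_killing_form (box a b c d) (conf_metric psi)
    (fmul (of_x F1) (dform (of_x F2))) ->
  non_null (box a b c d) (conf_metric psi) (fmul (of_x F1) (dform (of_x F2))) ->
  exists k : R, forall p, box a b c d p -> forall i,
    fmul (of_x F1) (dform (of_x F2)) i p = k * dform (of_x psi) i p.
Proof.
  intros Hab Hcd Spsi SF1 SF2 Hlor _ _ [lam Hck] _.
  set (t0 := (c + d) / 2).
  assert (Hphi : forall y, a < y < b -> Derive psi y <> 0).
  { intros y Hy. destruct (Hlor (y, t0)) as [_ Hdet].
    - split; simpl; unfold t0; lra.
    - unfold detg, conf_metric in Hdet; simpl in Hdet. intro E. rewrite E in Hdet. lra. }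
  set (Y := fun y => F1 y * Derive F2 y / Derive psi y).
  set (X := sharp (conf_metric psi) (fmul (of_x F1) (dform (of_x F2)))).
  assert (Xt : forall p, X it p = 0).
  { intros p. unfold X, sharp, sum2, ginv, fmul, dform, pd, of_x, conf_metric; simpl.
    rewrite Derive_const. unfold Rdiv. ring. }
  assert (Xx : forall p, a < fst p < b -> X ix p = Y (fst p)).
  { intros p Hp. unfold X, Y, sharp, sum2, ginv, fmul, dform, pd, of_x, conf_metric, detg; simpl.
    rewrite Derive_const. change (Derive (fun x => F2 x)) with (Derive F2). pose proof (Hphi _ Hp). field; auto. }
  assert (HY : forall x, a < x < b -> ex_derive Y x /\ Derive Y x = 0).
  { intros x Hx.
    assert (EY : ex_derive Y x).
    { unfold Y. apply ex_derive_div.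
      - apply ex_derive_mult. apply (SF1 1%nat x Hx). apply (SF2 2%nat x Hx).
      - apply (Spsi 2%nat x Hx).
      - apply Hphi; auto. }
    split; [exact EY|].
    assert (Hb : box a b c d (x, t0)) by (split; simpl; unfold t0; lra).
    pose proof (Hck _ Hb ix ix) as E1. pose proof (Hck _ Hb it it) as E2.
    fold X in E1, E2. unfold lie_metric, sum2, pd, conf_metric in E1, E2; simpl in E1, E2.
    rewrite !Xt in E1, E2.
    rewrite (Derive_ext (fun t => X it (x, t)) (fun _ => 0)) in E2 by (intro; apply Xt).
    rewrite Derive_const, Derive_opp in E2.
    rewrite (Derive_ext_loc (fun y => X ix (y, t0)) Y) in E1.
    2:{ apply (interval_locally a b x); [exact Hx|]. intros y Hy. apply (Xx (y, t0)). exact Hy. }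
    pose proof (Hphi _ Hx). rewrite Derive_const in E2. change (Derive (fun x => Derive psi x)) with (Derive (Derive psi)) in E1.
    assert (Derive psi x * Derive Y x = 0) by nra.
    apply Rmult_integral in H0. destruct H0; [contradiction|auto]. }
  set (m := (a + b) / 2).
  exists (Y m). intros p Hp [|].
  - unfold fmul, dform, of_x, pd; simpl. destruct Hp as [Hp _].
    pose proof (const_on Y a b HY (fst p) m Hp) as Em.
    assert (a < m < b) by (unfold m; lra). specialize (Em H). clear H.
    rewrite <- Em. unfold Y. change (Derive (fun x => F2 x)) with (Derive F2).
    change (Derive (fun x => psi x)) with (Derive psi).
    pose proof (Hphi _ Hp). field; auto.
  - unfold fmul, dform, of_x, pd; simpl. rewrite !Derive_const. ring.
Qed.
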